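(* Let $A\subseteq B\subseteq C$ be commutative rings with the same identity. If $A$ is a dense subring of $B$ and $B$ is a dense subring of $C$, then $A$ is a dense subring of $C$.
   Context: A subring $A$ of a ring $B$ is dense in $B$ if for every ideal $I$ of $B$ and every $b\in B\setminus \operatorname{rad}(I)$ there exists $a\in B\setminus\operatorname{rad}(I)$ with $ab\in A$. *)

(* Defs.v *)
(* Subrings A ⊆ B of an ambient commutative ring C are
   represented as predicates on C closed under the ring operations. *)
From mathcomp Require Import all_boot all_algebra.
Set Implicit Arguments. Unset Strict Implicit. Unset Printing Implicit Defensive.
Import GRing.Theory.
Local Open Scope ring_scope.

Section Dense.
Variable C : comPzRingType.

Definition is_subring (S : C -> Prop) : Prop :=
  [/\ S 0, S 1, (forall x y, S x -> S y -> S (x - y))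
   & (forall x y, S x -> S y -> S (x * y))].

Definition is_ideal_of (B I : C -> Prop) : Prop :=
  [/\ (forall x, I x -> B x), I 0,
      (forall x y, I x -> I y -> I (x - y))
   & (forall r x, B r -> I x -> I (r * x))].

Definition rad_in (B I : C -> Prop) (x : C) : Prop :=
  B x /\ exists n : nat, I (x ^+ n).

Definition dense_in (A B : C -> Prop) : Prop :=
  forall I : C -> Prop, is_ideal_of B I ->
  forall b, B b -> ~ rad_in B I b ->
  exists a, [/\ B a, ~ rad_in B I a & A (a * b)].

End Dense.

(* Main.v *)
Require Import Defs.
From mathcomp Require Import all_boot all_algebra.
Local Open Scope ring_scope.
Import GRing.Theory.
Set Implicit Arguments.

Definition colon {C : comPzRingType} (S I : C -> Prop) (y : C) : C -> Prop :=
  fun x => S x /\ exists n : nat, I (x * y ^+ n).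

Lemma colon_ideal (C : comPzRingType) (S I : C -> Prop) (y : C) :
  is_subring S -> is_ideal_of (fun _ => True) I -> is_ideal_of S (colon S I y).
Proof.
move=> [S0 S1 Ssub Smul] [_ I0 Isub Imul]; split.
- by move=> x [].
- by split=> //; exists 0%N; rewrite mul0r.
- move=> x z [Sx [n Hn]] [Sz [m Hm]]; split; first exact: Ssub.
  exists (n + m)%N; rewrite exprD mulrBl.
  have -> : z * (y ^+ n * y ^+ m) = y ^+ n * (z * y ^+ m) by rewrite mulrCA.
  apply: Isub; first by rewrite mulrA mulrC; apply: Imul.
  exact: Imul.
- move=> r x Sr [Sx [n Hn]]; split; first exact: Smul.
  by exists n; rewrite -mulrA; apply: Imul.
Qed.

Lemma subring_exp (C : comPzRingType) (S : C -> Prop) x n :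
  is_subring S -> S x -> S (x ^+ n).
Proof.
move=> [S0 S1 Ssub Smul] Sx; elim: n => [|n IH]; first by rewrite expr0.
by rewrite exprS; apply: Smul.
Qed.

Lemma colon_rad (C : comPzRingType) (S I : C -> Prop) (y x : C) :
  is_subring S -> S x -> ~ rad_in S (colon S I y) x ->
  ~ rad_in (fun _ => True) I (x * y).
Proof.
move=> HS Sx Hn [_ [k Hk]]; apply: Hn; split=> //; exists k; split.
  exact: subring_exp.
by exists k; rewrite -exprMn.
Qed.

Lemma colon_self (C : comPzRingType) (S I : C -> Prop) (y : C) :
  S y -> ~ rad_in (fun _ => True) I y -> ~ rad_in S (colon S I y) y.
Proof.
move=> Sy Hn [_ [k [_ [n Hk]]]]; apply: Hn; split=> //; exists (k + n)%N.
by rewrite exprD.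
Qed.

Theorem theorem3p2 (C : comPzRingType) (A B : C -> Prop) :
  is_subring A -> is_subring B -> (forall x, A x -> B x) ->
  dense_in A B -> dense_in B (fun _ : C => True) ->
  dense_in A (fun _ : C => True).
Proof.
move=> HA HB AB dAB dBC I HI c _ Hc.
have HT : is_subring (fun _ : C => True) by split.
have [c1 [_ Hc1 Bb]] := dBC _ (colon_ideal c HT HI) c Logic.I (colon_self Logic.I Hc).
set b := c1 * c in Bb.
have Hb : ~ rad_in (fun _ => True) I b by exact: colon_rad Hc1.
have [a1 [Ba1 Ha1 Aab]] := dAB _ (colon_ideal b HB HI) b Bb (colon_self Bb Hb).
have Hab := colon_rad HB Ba1 Ha1.
exists (a1 * c1); split=> //; last by rewrite -mulrA.
move=> [_ [k Hk]]; apply: Hab; split=> //; exists k.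
rewrite /b mulrA exprMn mulrC; have [_ _ _ Imul] := HI; exact: (Imul _ _ Logic.I Hk).
Qed.
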